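(* For each integer $m\ge-1$, the function $\hat r_{-m}(x',\xi)$ can be written as a finite sum of expressions of the form $|\xi|^{-k}p(x',\xi)$, each of total weight $m+1$, and for each summand the total parity, normal parity and $\xi$-parity are well defined and their sum is $0$ modulo $2$. The same holds for $r_{-m}(x,\xi)=-\hat r_{-m}(x,0,\xi)$.
   Context: Let $(\Omega,g)$ be a compact Riemannian manifold of dimension $n$ with smooth boundary $M$. In boundary normal coordinates $x'=(x,x^n)$, $x=(x^1,\dots,x^{n-1})$ ($x^n$ = parameter along inward normal geodesics from $M$), $g=\sum_{\alpha,\beta=1}^{n-1}g_{\alpha\beta}(x')dx^\alpha dx^\beta+(dx^n)^2$; Greek indices run over $1,\dots,n-1$, $\xi=(\xi^1,\dots,\xi^{n-1})$ are dual variables, $D_{x^j}=-i\partial_{x^j}$, $\delta=\det(g_{\alpha\beta})$. Set $E=-\frac12\sum g^{\alpha\beta}\partial_{x^n}g_{\alpha\beta}$, $q_2=\sum g^{\alpha\beta}\xi^\alpha\xi^\beta$, $q_1=-i\sum_{\alpha,\beta}(\frac12g^{\alpha\beta}\partial_{x^\alpha}\log\delta+\partial_{x^\alpha}g^{\alpha\beta})\xi^\beta$, and $|\xi|=\sqrt{q_2}$. Define $\hat r_1=-\sqrt{q_2}$, $\hat r_0=\frac{1}{2\sqrt{q_2}}\big(\sum_\alpha\partial_{\xi^\alpha}\sqrt{q_2}\,D_{x^\alpha}\sqrt{q_2}-q_1-\partial_{x^n}\sqrt{q_2}+E\sqrt{q_2}\big)$, and for $m\ge0$, $\hat r_{-m-1}=\frac{1}{2\sqrt{q_2}}\Big(\sum_{-m\le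 j\le1,\,-m\le k\le1,\,|K|=j+k+m}\frac1{K!}\partial_\xi^K\hat r_j\,D_x^K\hat r_k+\partial_{x^n}\hat r_{-m}-E\hat r_{-m}\Big)$, with $K\in\mathbb N^{n-1}$ multi-indices. (Then $\mathcal D$, the Dirichlet-to-Neumann operator, has full symbol $r_1+r_0+r_{-1}+\dots$ modulo smoothing.) An expression of the form $|\xi|^{-k}p(x',\xi)$ means $k\in\mathbb Z$ and $p$ a polynomial in $\xi$ whose coefficients are polynomials (with constant complex coefficients) in $g_{\alpha\beta}$, $g^{\alpha\beta}$ and their partial derivatives in $x'$. Its total (resp. normal) weight is $w$ if every monomial in $p$ contains exactly $w$ derivatives (resp. $w$ derivatives in $x^n$); its total (resp. normal) parity is $1$ if every monomial has odd total (resp. normal) weight and $0$ if every monomial has even one; its $\xi$-parity is $0$ if $p$ is even in $\xi$ and $1$ if odd. *)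

(* Defs.v *)
(* Formal (symbolic) model of the symbol calculus of
   Lemma 3.1: the r^_{-m} are computed as formal sums of monomial terms
   c * |xi|^{-k} * (product of factors), where the factors are
   partial derivatives d^K g_{ab}, d^K g^{ab} (K a multi-index in x'),
   and the dual variables xi^a. *)
From HB Require Import structures.
From mathcomp Require Import all_boot all_order all_algebra.
From mathcomp Require Import algC.
Set Implicit Arguments. Unset Strict Implicit. Unset Printing Implicit Defensive.
Import Order.TTheory GRing.Theory Num.Theory.
Local Open Scope ring_scope.

(* Conventions (n = dimension of Omega):
   - tangential (Greek) indices alpha = 1..n-1 are encoded as 0..n-2;
   - coordinates x' = (x^1,..,x^n) are encoded as 0..n-1; the normal
     coordinate x^n is the index n.-1;
   - a derivative multi-index K in N^n is a function nat -> nat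
     (only the values at 0..n-1 matter). *)
Definition mindex := nat -> nat.
Definition mzero : mindex := fun _ => 0%N.
Definition mincr (K : mindex) (j : nat) : mindex :=
  fun i => if i == j then (K i).+1 else K i.

Inductive factor :=
| Gd of nat & nat & mindex   (* d_{x'}^K g_{ab} *)
| Gi of nat & nat & mindex   (* d_{x'}^K g^{ab} *)
| Xi of nat.                 (* xi^a *)

(* Term c k fs  stands for  c * |xi|^{-k} * prod fs *)
Record term := Term { tcoef : algC; texp : int; tfac : seq factor }.
(* an expression is a finite (formal) sum of terms *)
Definition expr := seq term.

Definition tmul (t u : term) : term :=
  Term (tcoef t * tcoef u) (texp t + texp u) (tfac t ++ tfac u).
Definition emul (e f : expr) : expr := [seq tmul t u | t <- e, u <- f].
Definition escale (c : algC) (e : expr) : expr :=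
  [seq Term (c * tcoef t) (texp t) (tfac t) | t <- e].
(* multiplication by 1/(2 sqrt q2) = (1/2) |xi|^{-1} *)
Definition half_inv_abs (e : expr) : expr :=
  [seq Term (tcoef t / 2) (texp t + 1) (tfac t) | t <- e].

Definition tang (n : nat) : seq nat := iota 0 n.-1.
Definition nrm (n : nat) : nat := n.-1.

Definition q2 (n : nat) : expr :=
  flatten [seq [seq Term 1 0 [:: Gi a b mzero; Xi a; Xi b] | b <- tang n]
          | a <- tang n].
(* sqrt q2 = |xi| = |xi|^{-(-1)} *)
Definition absxi : expr := [:: Term 1 (-1) [::]].

(* Derivations.  [dfac f] is the derivative of a single factor,
   as a formal sum of (coefficient, product of factors). *)
Section Derivation.
Variable dfac : factor -> seq (algC * seq factor).

Fixpoint dfacs (fs : seq factor) : seq (algC * seq factor) :=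
  match fs with
  | [::] => [::]
  | f :: fs' => [seq (p.1, p.2 ++ fs') | p <- dfac f]
                ++ [seq (p.1, f :: p.2) | p <- dfacs fs']
  end.

(* derivative of the polynomial part only *)
Definition dpoly (e : expr) : expr :=
  flatten [seq [seq Term (tcoef t * p.1) (texp t) p.2 | p <- dfacs (tfac t)]
          | t <- e].

(* full derivative, using d(|xi|^{-k}) = (-k/2) |xi|^{-k-2} d(q2) *)
Definition dterm (dq2 : expr) (t : term) : expr :=
  [seq Term (tcoef t * p.1) (texp t) p.2 | p <- dfacs (tfac t)]
  ++ escale (- (texp t)%:~R / 2) (emul [:: Term (tcoef t) (texp t + 2) (tfac t)] dq2).

Definition dexpr (n : nat) (e : expr) : expr :=
  flatten [seq dterm (dpoly (q2 n)) t | t <- e].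
End Derivation.

Definition dfac_x (j : nat) (f : factor) : seq (algC * seq factor) :=
  match f with
  | Gd a b K => [:: (1, [:: Gd a b (mincr K j)])]
  | Gi a b K => [:: (1, [:: Gi a b (mincr K j)])]
  | Xi _ => [::]
  end.
Definition dfac_xi (c : nat) (f : factor) : seq (algC * seq factor) :=
  match f with
  | Xi a => if a == c then [:: (1, [::])] else [::]
  | _ => [::]
  end.

Definition dx (n j : nat) (e : expr) : expr := dexpr (dfac_x j) n e.
Definition dxi (n c : nat) (e : expr) : expr := dexpr (dfac_xi c) n e.
Definition Dx (n j : nat) (e : expr) : expr := escale (- 'i) (dx n j e).

(* multi-indices K in N^{n-1} (tangential), as sequences of length n-1 *)
Fixpoint mindices (len N : nat) : seq (seq nat) :=
  match len with
  | 0 => if N == 0%N then [:: [::]] else [::]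
  | len'.+1 => flatten [seq [seq i :: K | K <- mindices len' (N - i)]
                       | i <- iota 0 N.+1]
  end.
Definition Kfact (K : seq nat) : nat := \prod_(k <- K) k`!.
Definition DxK (n : nat) (K : seq nat) (e : expr) : expr :=
  foldl (fun e a => iter (nth 0%N K a) (Dx n a) e) e (tang n).
Definition dxiK (n : nat) (K : seq nat) (e : expr) : expr :=
  foldl (fun e a => iter (nth 0%N K a) (dxi n a) e) e (tang n).

Definition Eexp (n : nat) : expr :=
  flatten [seq [seq Term (- (1/2)) 0 [:: Gi a b mzero; Gd a b (mincr mzero (nrm n))]
               | b <- tang n] | a <- tang n].
(* q1 = -i sum_{a,b} (1/2 g^{ab} d_a log delta + d_a g^{ab}) xi^b,
   with d_a log delta = sum_{c,d} g^{cd} d_a g_{cd} (Jacobi's formula) *)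
Definition q1 (n : nat) : expr :=
  flatten [seq flatten [seq
     [seq Term (- 'i / 2) 0 [:: Gi a b mzero; Gi c d mzero; Gd c d (mincr mzero a); Xi b]
     | c <- tang n, d <- tang n]
     ++ [:: Term (- 'i) 0 [:: Gi a b (mincr mzero a); Xi b]]
   | b <- tang n] | a <- tang n].

(* r^_1 = - sqrt q2 *)
Definition rhat1 : expr := [:: Term (-1) (-1) [::]].
Definition rhat0 (n : nat) : expr :=
  half_inv_abs
   (flatten [seq emul (dxi n a absxi) (Dx n a absxi) | a <- tang n]
    ++ escale (-1) (q1 n)
    ++ escale (-1) (dx n (nrm n) absxi)
    ++ emul (Eexp n) absxi).

(* Given L = [:: r^_1; r^_0; ...; r^_{-m}] (m >= 0), compute r^_{-m-1}.
   r^_j is at position 1 - j in L. *)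
Definition rnext (n : nat) (L : seq expr) : expr :=
  let m := (size L).-2 in
  let last := nth [::] L m.+1 in
  half_inv_abs
   (flatten [seq flatten [seq
       (if (a + b <= m + 2)%N then
          flatten [seq escale ((Kfact K)%:R^-1)
                         (emul (dxiK n K (nth [::] L a)) (DxK n K (nth [::] L b)))
                  | K <- mindices n.-1 (m + 2 - a - b)]
        else [::])
     | b <- iota 0 (m + 2)] | a <- iota 0 (m + 2)]
    ++ dx n (nrm n) last
    ++ escale (-1) (emul (Eexp n) last)).

(* rhats n N = [:: r^_1; r^_0; ...; r^_{1-N}] *)
Fixpoint rhats (n N : nat) : seq expr :=
  match N with
  | 0 => [:: rhat1]
  | N'.+1 => if N' is 0 then [:: rhat1; rhat0 n]
             else let L := rhats n N' in rcons L (rnext n L)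
  end.

Definition rhat (n : nat) (m : int) : expr :=
  nth [::] (rhats n (absz (m + 1))) (absz (m + 1)).
(* r_{-m}(x,xi) = - r^_{-m}(x,0,xi): restricting the coefficient functions
   to x^n = 0 does not change the formal expression. *)
Definition rbd (n : nat) (m : int) : expr := escale (-1) (rhat n m).

Definition fweight (n : nat) (f : factor) : nat :=
  match f with
  | Gd _ _ K | Gi _ _ K => \sum_(i < n) K i
  | Xi _ => 0
  end.
Definition fnweight (n : nat) (f : factor) : nat :=
  match f with
  | Gd _ _ K | Gi _ _ K => K (nrm n)
  | Xi _ => 0
  end.
Definition fxideg (f : factor) : nat := if f is Xi _ then 1 else 0.

Definition tweight n (t : term) : nat := sumn [seq fweight n f | f <- tfac t].
Definition tnweight n (t : term) : nat := sumn [seq fnweight n f | f <- tfac t].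
Definition txideg (t : term) : nat := sumn [seq fxideg f | f <- tfac t].

Definition good_term (n w : nat) (t : term) : bool :=
  (tweight n t == w) && ~~ odd (tweight n t + tnweight n t + txideg t).

(* Main.v *)
Require Import Defs.
From HB Require Import structures.
From mathcomp Require Import all_boot all_order all_algebra.
From mathcomp Require Import algC zify.
Import Order.TTheory GRing.Theory Num.Theory.
Local Open Scope ring_scope.

Definition cls (n w : nat) (s : bool) (e : expr) : bool :=
  all (fun t => (tweight n t == w) && (odd (tnweight n t + txideg t) == s)) e.

Lemma all_flat (T : Type) (P : pred T) (l : seq (seq T)) :
  all (all P) l -> all P (flatten l).
Proof. by elim: l => //= a l IH /andP[Ha Hl]; rewrite all_cat Ha IH. Qed.

Lemma cls_cat n w s e f : cls n w s e -> cls n w s f -> cls n w s (e ++ f).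
Proof. by rewrite /cls all_cat => -> ->. Qed.

Lemma cls_flat n w s (l : seq expr) : all (cls n w s) l -> cls n w s (flatten l).
Proof. exact: all_flat. Qed.

Lemma cls_escale n w s c e : cls n w s e -> cls n w s (escale c e).
Proof. by rewrite /cls /escale all_map. Qed.

Lemma cls_half n w s e : cls n w s e -> cls n w s (half_inv_abs e).
Proof. by rewrite /cls /half_inv_abs all_map. Qed.

Lemma sumn_map_cat (T : Type) (g : T -> nat) a b :
  sumn (map g (a ++ b)) = (sumn (map g a) + sumn (map g b))%N.
Proof. by rewrite map_cat sumn_cat. Qed.

Lemma cls_emul n w1 s1 w2 s2 e f : cls n w1 s1 e -> cls n w2 s2 f ->
  cls n (w1 + w2) (s1 (+) s2) (emul e f).
Proof.
rewrite /emul; elim: e => //= t e IH /andP[/andP[/eqP Ht Hs] He] Hf.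
apply: cls_cat; last exact: IH.
rewrite /cls all_map.
move: Hf; apply: sub_all => u /andP[/eqP Hu Hsu] /=.
rewrite /tweight /tnweight /txideg /= !sumn_map_cat.
rewrite -/(tweight n t) -/(tweight n u) Ht Hu eqxx /=.
rewrite -(eqP Hs) -(eqP Hsu) /tnweight /txideg !oddD.
by case: (odd _); case: (odd _); case: (odd _); case: (odd _).
Qed.

Ltac bcase := repeat (match goal with |- context [odd ?x] => case: (odd x) end);
  repeat (match goal with b : bool |- _ => destruct b end); move=> /= ?; try discriminate; done.

Lemma all_impl (T : Type) (P Q : pred T) s : (forall x, P x -> Q x) -> all P s -> all Q s.
Proof. by move=> H; elim: s => //= x s IH /andP[/H -> /IH]. Qed.

Definition sw n (fs : seq factor) := sumn [seq fweight n f | f <- fs].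
Definition snw n (fs : seq factor) := sumn [seq fnweight n f | f <- fs].
Definition sd (fs : seq factor) := sumn [seq fxideg f | f <- fs].

Definition dgood n dw ds (fs : seq factor) (p : algC * seq factor) : bool :=
  (sw n p.2 == (sw n fs + dw)%N) &&
  (odd (snw n p.2 + sd p.2) == odd (snw n fs + sd fs) (+) ds).

Lemma dfacs_prop dfac n dw ds :
  (forall f, all (dgood n dw ds [:: f]) (dfac f)) ->
  forall fs, all (dgood n dw ds fs) (dfacs dfac fs).
Proof.
move=> Hf; elim=> //= f fs IH; rewrite all_cat !all_map; apply/andP; split.
  move: (Hf f); apply: sub_all => -[c p] /andP[/eqP H1 /eqP H2] /=.
  rewrite /dgood /= /sw /snw /sd !sumn_map_cat -/(sw n p) -/(snw n p) -/(sd p).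
  rewrite H1 /sw /= addn0; apply/andP; split; first by apply/eqP; lia.
  move: H2; rewrite /snw /sd /= !addn0 !oddD; bcase.
apply: (@all_impl _ (dgood n dw ds fs) _ _ _ IH) => -[c p] /andP[/eqP H1 /eqP H2] /=.
rewrite /dgood /= /sw /snw /sd /= -/(sw n p) -/(snw n p) -/(sd p) H1.
rewrite -/(sw n fs); apply/andP; split; first by apply/eqP; lia.
move: H2; rewrite -/(snw n fs) -/(sd fs) !oddD; bcase.
Qed.

Lemma cls_dpoly_term dfac n w s dw ds t c k :
  (forall f, all (dgood n dw ds [:: f]) (dfac f)) ->
  cls n w s [:: t] ->
  cls n (w + dw) (s (+) ds)
    [seq Term (c * p.1) k p.2 | p <- dfacs dfac (tfac t)].
Proof.
move=> Hf; rewrite /cls /= andbT => /andP[/eqP Hw /eqP Hs].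
rewrite all_map; apply: (@all_impl _ (dgood n dw ds (tfac t)) _ _ _ (@dfacs_prop dfac n dw ds Hf (tfac t))).
move=> [c' p] /andP[/eqP H1 /eqP H2] /=.
rewrite /tweight /tnweight /txideg /= -/(sw n p) -/(snw n p) -/(sd p) H1.
rewrite /sw -/(tweight n t) Hw eqxx /=; rewrite H2 /snw /sd -/(tnweight n t) -/(txideg t) Hs.
by [].
Qed.

Lemma cls_dpoly dfac n w s dw ds e :
  (forall f, all (dgood n dw ds [:: f]) (dfac f)) ->
  cls n w s e -> cls n (w + dw) (s (+) ds) (dpoly dfac e).
Proof.
move=> Hf; elim: e => // t e IH /= /andP[Ht He].
apply: cls_cat; last exact: IH.
by apply: cls_dpoly_term => //; rewrite /cls /= Ht.
Qed.

Lemma sum_mzero n : (\sum_(i < n) mzero i)%N = 0%N.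
Proof. by rewrite big1. Qed.

Lemma cls_q2 n : cls n 0 false (q2 n).
Proof.
rewrite /q2; apply: cls_flat; rewrite all_map; apply/allP => a _ /=.
rewrite /cls all_map; apply/allP => b _ /=.
by rewrite /tweight /tnweight /txideg /= sum_mzero.
Qed.

Lemma cls_dexpr dfac n w s dw ds e :
  (forall f, all (dgood n dw ds [:: f]) (dfac f)) ->
  cls n w s e -> cls n (w + dw) (s (+) ds) (dexpr dfac n e).
Proof.
move=> Hf; elim: e => // t e IH /= /andP[Ht He].
apply: cls_cat; last exact: IH.
rewrite /dterm; apply: cls_cat.
  by apply: cls_dpoly_term => //; rewrite /cls /= Ht.
apply: cls_escale; apply: cls_emul; last by apply: (@cls_dpoly dfac n 0 false dw ds _ Hf (cls_q2 n)).
by move: Ht; rewrite /cls /= andbT.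
Qed.

Lemma sum_eqj n j : (\sum_(i < n) (nat_of_ord i == j : nat))%N = (j < n)%N.
Proof.
elim: n => [|n IH]; first by rewrite big_ord0.
rewrite big_ord_recr /= IH ltnS leq_eqVlt.
case: (ltngtP j n) => [h|h|->]; rewrite ?eqxx /=; try lia.
Qed.

Lemma sum_mincr n (K : mindex) j : (j < n)%N ->
  (\sum_(i < n) mincr K j i)%N = ((\sum_(i < n) K i) + 1)%N.
Proof.
move=> jn; rewrite (eq_bigr (fun i : 'I_n => K i + (nat_of_ord i == j))%N).
  by rewrite big_split /= sum_eqj jn.
by move=> i _; rewrite /mincr; case: (_ == _); rewrite ?addn0 ?addn1.
Qed.

Lemma dgood_x n j f : (j < n)%N ->
  all (dgood n 1 (j == nrm n) [:: f]) (dfac_x j f).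
Proof.
move=> jn; case: f => [a b K|a b K|a] //=; rewrite andbT /dgood /sw /snw /sd /=;
  rewrite !addn0 sum_mincr // eqxx /= /mincr [nrm n == j]eq_sym;
  by case: (j == nrm n); rewrite /= ?addbF ?addbT.
Qed.

Lemma dgood_xi n c f : all (dgood n 0 true [:: f]) (dfac_xi c f).
Proof.
case: f => [a b K|a b K|a] //=; case: (a == c) => //=.
Qed.

Lemma cls_dx n j w s e : (j < n)%N -> cls n w s e ->
  cls n (w + 1) (s (+) (j == nrm n)) (dx n j e).
Proof. by move=> jn; apply: cls_dexpr => f; apply: dgood_x. Qed.

Lemma cls_Dx n j w s e : (j < n)%N -> cls n w s e ->
  cls n (w + 1) (s (+) (j == nrm n)) (Dx n j e).
Proof. by move=> jn He; apply: cls_escale; apply: cls_dx. Qed.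

Lemma cls_dxi n c w s e : cls n w s e -> cls n w (~~ s) (dxi n c e).
Proof.
move=> He; have := (@cls_dexpr (dfac_xi c) n w s 0 true e (dgood_xi n c) He).
by rewrite addn0 addbT.
Qed.

Lemma tang_lt n : all (fun a => (a < n.-1)%N) (tang n).
Proof. by apply/allP => a; rewrite /tang mem_iota. Qed.

Lemma cls_iterDx n a k w s e : (a < n.-1)%N -> cls n w s e ->
  cls n (w + k) s (iter k (Dx n a) e).
Proof.
move=> an He; elim: k => [|k IH] /=; first by rewrite addn0.
have h1 : (a < n)%N by lia.
have h2 : (a == nrm n) = false by rewrite /nrm; apply/eqP; lia.
have -> : (w + k.+1 = w + k + 1)%N by lia.
by have := @cls_Dx n a _ _ _ h1 IH; rewrite h2 addbF.
Qed.

Lemma cls_iterdxi n a k w s e : cls n w s e ->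
  cls n w (s (+) odd k) (iter k (dxi n a) e).
Proof.
move=> He; elim: k => [|k IH] /=; first by rewrite addbF.
by have := @cls_dxi n a _ _ _ IH; rewrite addbN.
Qed.

Lemma cls_foldDx n (K : seq nat) l w s e : all (fun a => (a < n.-1)%N) l ->
  cls n w s e ->
  cls n (w + sumn (map (nth 0%N K) l)) s
    (foldl (fun e a => iter (nth 0%N K a) (Dx n a) e) e l).
Proof.
elim: l w e => [|a l IH] w e /=; first by rewrite addn0.
move=> /andP[ha hl] He; rewrite addnA; apply: IH => //.
exact: cls_iterDx.
Qed.

Lemma cls_folddxi n (K : seq nat) l w s e :
  cls n w s e ->
  cls n w (s (+) odd (sumn (map (nth 0%N K) l)))
    (foldl (fun e a => iter (nth 0%N K a) (dxi n a) e) e l).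
Proof.
elim: l s e => [|a l IH] s e /=; first by rewrite addbF.
move=> He; rewrite oddD addbA; apply: IH.
exact: cls_iterdxi.
Qed.

Lemma mindicesS len N : mindices len.+1 N =
  flatten [seq [seq i :: K | K <- mindices len (N - i)] | i <- iota 0 N.+1].
Proof. by []. Qed.

Lemma mindices_prop len N K : K \in mindices len N ->
  (size K == len) && (sumn K == N).
Proof.
elim: len N K => [|len IH] N K.
  by rewrite /=; case: (N =P 0%N) => [->|_]; rewrite ?inE // => /eqP ->.
rewrite mindicesS; move/flatten_mapP => [i]; rewrite mem_iota => /andP[_ hi] /mapP[K1 hK' ->] /=.
case/andP: (IH _ _ hK') => /eqP -> /eqP ->; rewrite eqxx /=.
by rewrite add0n ltnS in hi; rewrite subnKC.
Qed.

Lemma cls_DxK n K w s e : K \in mindices n.-1 (sumn K) ->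
  cls n w s e -> cls n (w + sumn K) s (DxK n K e).
Proof.
move=> /mindices_prop /andP[/eqP hs _] He.
have := @cls_foldDx n K (tang n) _ _ _ (tang_lt n) He.
have hm : [seq nth 0%N K i | i <- iota 0 (size K)] = K by exact: (mkseq_nth 0%N K).
by rewrite /DxK /dxiK /tang -hs hm.
Qed.

Lemma cls_dxiK n K w s e : K \in mindices n.-1 (sumn K) ->
  cls n w s e -> cls n w (s (+) odd (sumn K)) (dxiK n K e).
Proof.
move=> /mindices_prop /andP[/eqP hs _] He.
have := @cls_folddxi n K (tang n) _ _ _ He.
have hm : [seq nth 0%N K i | i <- iota 0 (size K)] = K by exact: (mkseq_nth 0%N K).
by rewrite /DxK /dxiK /tang -hs hm.
Qed.

Lemma fw_mincr0 n j : (j < n)%N -> (\sum_(i < n) mincr mzero j i)%N = 1%N.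
Proof. by move=> h; rewrite sum_mincr // sum_mzero. Qed.

Lemma sum_mzeroR n : (\sum_(i < n) mzero i : nat) = 0%N.
Proof. exact: sum_mzero. Qed.
Lemma fw_mincr0R n j : (j < n)%N -> (\sum_(i < n) mincr mzero j i : nat) = 1%N.
Proof. exact: fw_mincr0. Qed.
Lemma sum_mincrR n (K : mindex) j : (j < n)%N ->
  (\sum_(i < n) mincr K j i : nat) = ((\sum_(i < n) K i : nat) + 1)%N.
Proof. exact: sum_mincr. Qed.

Lemma cls_Eexp n : (1 <= n)%N -> cls n 1 true (Eexp n).
Proof.
move=> hn; rewrite /Eexp; apply: cls_flat; rewrite all_map; apply/allP => a _ /=.
rewrite /cls all_map; apply/allP => b _ /=.
rewrite /tweight /tnweight /txideg /= sum_mzeroR fw_mincr0R /nrm; last by lia.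
by rewrite /mincr eqxx.
Qed.

Lemma cls_q1 n : cls n 1 true (q1 n).
Proof.
rewrite /q1; apply: cls_flat; rewrite all_map; apply/allP => a ha /=.
apply: cls_flat; rewrite all_map; apply/allP => b _ /=.
have han : (a < n.-1)%N by move: ha; rewrite /tang mem_iota.
have h1 : (a < n)%N by lia.
have h2 : (n.-1 == a) = false by apply/eqP; lia.
apply: cls_cat.
  rewrite /cls; apply/all_allpairsP => c d _ _ /=.
  by rewrite /tweight /tnweight /txideg /= ?sum_mzeroR fw_mincr0R // /nrm /mincr h2.
by rewrite /cls /= /tweight /tnweight /txideg /= ?sum_mzeroR fw_mincr0R // /nrm /mincr h2.
Qed.

Lemma cls_absxi n : cls n 0 false absxi.
Proof. by []. Qed.

Lemma cls_rhat1 n : cls n 0 false rhat1.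
Proof. by []. Qed.

Lemma cls_rhat0 n : (1 <= n)%N -> cls n 1 true (rhat0 n).
Proof.
move=> hn; rewrite /rhat0; apply: cls_half.
apply: cls_cat; [|apply: cls_cat; [|apply: cls_cat]].
- apply: cls_flat; rewrite all_map; apply/allP => a ha /=.
  have han : (a < n.-1)%N by move: ha; rewrite /tang mem_iota.
  have h1 : (a < n)%N by lia.
  have h2 : (a == nrm n) = false by rewrite /nrm; apply/eqP; lia.
  have := @cls_emul n _ _ _ _ _ _ (@cls_dxi n a _ _ _ (cls_absxi n)) (@cls_Dx n a _ _ _ h1 (cls_absxi n)).
  by rewrite h2.
- by apply: cls_escale; exact: cls_q1.
- have h1 : (nrm n < n)%N by rewrite /nrm; lia.
  by apply: cls_escale; have := @cls_dx n (nrm n) _ _ _ h1 (cls_absxi n); rewrite eqxx.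
- by have := (@cls_emul n _ _ _ _ _ _ (cls_Eexp n hn) (cls_absxi n)); rewrite addn0 addbF.
Qed.

Lemma cls_rnext n L : (1 <= n)%N -> (2 <= size L)%N ->
  (forall i, (i < size L)%N -> cls n i (odd i) (nth [::] L i)) ->
  cls n (size L) (odd (size L)) (rnext n L).
Proof.
move=> hn hL HL; rewrite /rnext.
have hm : ((size L).-2 + 2 = size L)%N by lia.
rewrite hm; apply: cls_half.
apply: cls_cat; [|apply: cls_cat].
- apply: cls_flat; rewrite all_map; apply/allP => a ha /=.
  apply: cls_flat; rewrite all_map; apply/allP => b hb /=.
  case: ifP => hab //.
  apply: cls_flat; rewrite all_map; apply/allP => K hK /=.
  move: ha hb; rewrite !mem_iota /= !add0n => ha hb.
  have /andP[_ /eqP hs] := @mindices_prop _ _ _ hK.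
  rewrite -hs in hK.
  apply: cls_escale.
  have := @cls_emul n _ _ _ _ _ _ (@cls_dxiK n K _ _ _ hK (HL a ha))
                              (@cls_DxK n K _ _ _ hK (HL b hb)).
  have -> : (a + (b + sumn K) = size L)%N by lia.
  suff -> : odd (size L) = odd a (+) odd (sumn K) (+) odd b by [].
  have -> : size L = (a + sumn K + b)%N by lia.
  by rewrite !oddD.
- have h1 : (nrm n < n)%N by rewrite /nrm; lia.
  have hl : ((size L).-2.+1 < size L)%N by lia.
  have := @cls_dx n (nrm n) _ _ _ h1 (HL _ hl).
  have -> : ((size L).-2.+1 + 1 = size L)%N by lia.
  rewrite eqxx addbT.
  suff -> : ~~ odd (size L).-2.+1 = odd (size L) by [].
  have -> : size L = ((size L).-2.+1).+1 by lia.
  by rewrite /= negbK.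
- apply: cls_escale.
  have hl : ((size L).-2.+1 < size L)%N by lia.
  have := @cls_emul n _ _ _ _ _ _ (cls_Eexp n hn) (HL _ hl).
  have -> : (1 + (size L).-2.+1 = size L)%N by lia.
  suff -> : true (+) odd (size L).-2.+1 = odd (size L) by [].
  have -> : size L = ((size L).-2.+1).+1 by lia.
  by rewrite /= negbK; case: (odd _).
Qed.

Lemma rhats_inv n N : (1 <= n)%N ->
  size (rhats n N) = N.+1 /\
  (forall i, (i < N.+1)%N -> cls n i (odd i) (nth [::] (rhats n N) i)).
Proof.
move=> hn; elim: N => [|N [IHs IHc]].
  by split => // -[|i] //= _; exact: cls_rhat1.
case: N IHs IHc => [|N] IHs IHc.
  by split => // -[|[|i]] //= _; exact: cls_rhat0.
rewrite [rhats n N.+2]/=.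
split; first by rewrite size_rcons IHs.
move=> i hi; rewrite nth_rcons IHs.
case: ltnP => h1; first exact: IHc.
have -> : i = N.+2 by lia.
rewrite eqxx; rewrite -IHs; apply: cls_rnext => //; first by rewrite IHs.
by move=> j; rewrite IHs; apply: IHc.
Qed.

Lemma cls_good n w e : cls n w (odd w) e -> all (good_term n w) e.
Proof.
apply: all_impl => t /andP[/eqP hw /eqP hs].
rewrite /good_term hw eqxx /= -addnA oddD hs.
by case: (odd w).
Qed.

Theorem lemma3p1 (n : nat) (m : int) :
  (1 <= n)%N -> -1 <= m ->
  all (good_term n (absz (m + 1))) (rhat n m) /\
  all (good_term n (absz (m + 1))) (rbd n m).
Proof.
move=> hn _.
have [_ H] := @rhats_inv n (absz (m + 1)) hn.
have hc := H _ (ltnSn _).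
split; apply: cls_good; first exact: hc.
by apply: cls_escale; exact: hc.
Qed.
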